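(* Let $r$ and $n$ be positive integers, let $p\in\mathbb C$ with $\operatorname{Re}(r(p+1))>1$, and let $t\in\mathbb C$ with $|t|\le1$. Then $$M_r(t;n):=\sum_{k\ge1}\frac{M_r(t;n,k)}{k^{rp}}=\frac{\mathrm{Li}_{rp+r}(t)}{\zeta(rp+r)}\,\sigma_{-p}(n,r).$$
   Context: For positive integers $a,b,r$, $(a,b)_r$ denotes the largest $r$-th power dividing both $a$ and $b$. The $r$-Ramanujan sum is $c_r(n,k):=\sum_{1\le m\le k^r,\ (m,k^r)_r=1}e^{2\pi i mn/k^r}$, and $M_r(t;n,k):=\frac{1}{k^r}\sum_{d\mid k}c_r(n,k/d)\,t^d$. $\mathrm{Li}_s(t):=\sum_{k\ge1}t^k/k^s$ is the polylogarithm, $\zeta$ the Riemann zeta function, and $\sigma_p(n,r):=\sum_{d\ge1,\ d^r\mid n}d^{rp}$. *)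

(* Defs.v *)
From Stdlib Require Import Reals List Arith.
From Coquelicot Require Import Coquelicot.
Open Scope C_scope.

Definition cis (th : R) : C := (cos th, sin th).

(* x^s := exp(s ln x) for real x > 0 and complex s (principal power) *)
Definition cpowR (x : R) (s : C) : C :=
  RtoC (exp (Re s * ln x)) * cis (Im s * ln x).

Definition csum (l : list nat) (f : nat -> C) : C :=
  fold_right (fun m acc => f m + acc) 0 l.

(* (a,b)_r : the largest r-th power d^r dividing both a and b
   (for a >= 1 every such d satisfies 1 <= d <= a) *)
Definition gcdr (r a b : nat) : nat :=
  list_max (map (fun d => if (Nat.eqb (a mod d ^ r)%nat 0 && Nat.eqb (b mod d ^ r)%nat 0)%bool
                          then (d ^ r)%nat else 0%nat) (seq 1 a)).

Definition ramr (r n k : nat) : C :=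
  csum (filter (fun m => Nat.eqb (gcdr r m (k ^ r)%nat) 1) (seq 1 (k ^ r)%nat))
       (fun m => cis (2 * PI * INR m * INR n / INR (k ^ r)%nat)).

Definition Mr (r : nat) (t : C) (n k : nat) : C :=
  / RtoC (INR (k ^ r)%nat) *
  csum (filter (fun d => Nat.eqb (k mod d)%nat 0) (seq 1 k))
       (fun d => ramr r n (k / d)%nat * pow_n t d).

(* sum of a complex series (the value is meaningful when the series converges) *)
Definition CSeries (a : nat -> C) : C :=
  (Series (fun k => Re (a k)), Series (fun k => Im (a k))).

Definition Li (s t : C) : C :=
  CSeries (fun k : nat => pow_n t (S k) / cpowR (INR (S k)) s).

Definition zeta (s : C) : C :=
  CSeries (fun k : nat => / cpowR (INR (S k)) s).

(* sigma_q(n,r) = sum_{d >= 1, d^r | n} d^{r q}  (for n >= 1, d <= n) *)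
Definition sigmar (q : C) (n r : nat) : C :=
  csum (filter (fun d => Nat.eqb (n mod d ^ r)%nat 0) (seq 1 n))
       (fun d => cpowR (INR d) (RtoC (INR r) * q)).

(* Main.v *)
Require Import Defs.
From Stdlib Require Import Reals Arith Lia List Permutation Lra Bool.
From Coquelicot Require Import Coquelicot.
Open Scope C_scope.

Open Scope C_scope.

Definition rsum (l : list nat) (f : nat -> R) : R :=
  fold_right (fun m acc => (f m + acc)%R) 0%R l.

Lemma csum_nil (f : nat -> C) : csum nil f = 0. Proof. reflexivity. Qed.
Lemma csum_cons a l (f : nat -> C) : csum (a :: l) f = f a + csum l f. Proof. reflexivity. Qed.
Lemma csum_app l1 l2 (f : nat -> C) : csum (l1 ++ l2) f = csum l1 f + csum l2 f.
Proof. induction l1; simpl. ring. unfold csum in *; simpl in *. rewrite IHl1. ring. Qed.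
Lemma csum_ext l (f g : nat -> C) : (forall x, In x l -> f x = g x) -> csum l f = csum l g.
Proof. induction l; simpl; intros H; auto. unfold csum in *; simpl. rewrite H by auto. rewrite IHl; auto. Qed.
Lemma csum_filter (P : nat -> bool) l (f : nat -> C) :
  csum (filter P l) f = csum l (fun x => if P x then f x else 0).
Proof. induction l; simpl; auto. destruct (P a); unfold csum in *; simpl; rewrite IHl; auto; ring. Qed.
Lemma csum_plus l (f g : nat -> C) : csum l (fun x => f x + g x) = csum l f + csum l g.
Proof. induction l; simpl. ring. unfold csum in *; simpl in *. rewrite IHl. ring. Qed.
Lemma csum_opp l (f : nat -> C) : csum l (fun x => - f x) = - csum l f.
Proof. induction l; simpl. ring. unfold csum in *; simpl in *. rewrite IHl. ring. Qed.
Lemma csum_scal l (c : C) (f : nat -> C) : csum l (fun x => c * f x) = c * csum l f.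
Proof. induction l; simpl. ring. unfold csum in *; simpl in *. rewrite IHl. ring. Qed.
Lemma csum_scal_r l (c : C) (f : nat -> C) : csum l (fun x => f x * c) = csum l f * c.
Proof. induction l; simpl. ring. unfold csum in *; simpl in *. rewrite IHl. ring. Qed.
Lemma csum_zero l (f : nat -> C) : (forall x, In x l -> f x = 0) -> csum l f = 0.
Proof. induction l; simpl; intros H; auto. unfold csum in *; simpl in *.
 rewrite H by auto. rewrite IHl; auto. ring. Qed.
Lemma csum_swap (l1 l2 : list nat) (F : nat -> nat -> C) :
  csum l1 (fun x => csum l2 (fun y => F x y)) = csum l2 (fun y => csum l1 (fun x => F x y)).
Proof. induction l1; simpl. symmetry; apply csum_zero; auto.
 change (csum l2 (fun y => F a y) + csum l1 (fun x => csum l2 (fun y => F x y)) =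
   csum l2 (fun y => F a y + csum l1 (fun x => F x y))).
 rewrite IHl1. rewrite csum_plus. reflexivity. Qed.
Lemma csum_perm l1 l2 (f : nat -> C) : Permutation l1 l2 -> csum l1 f = csum l2 f.
Proof. induction 1; unfold csum in *; simpl; auto. rewrite IHPermutation; auto. ring. congruence. Qed.
Lemma csum_map g l (f : nat -> C) : csum (map g l) f = csum l (fun x => f (g x)).
Proof. induction l; simpl; auto. unfold csum in *; simpl. rewrite IHl; auto. Qed.

Lemma rsum_app l1 l2 f : rsum (l1 ++ l2) f = (rsum l1 f + rsum l2 f)%R.
Proof. induction l1; simpl. ring. rewrite IHl1. ring. Qed.
Lemma rsum_ext l f g : (forall x, In x l -> f x = g x) -> rsum l f = rsum l g.
Proof. induction l; simpl; intros H; auto. rewrite H by auto. rewrite IHl; auto. Qed.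
Lemma rsum_le l f g : (forall x, In x l -> (f x <= g x)%R) -> (rsum l f <= rsum l g)%R.
Proof. induction l; simpl; intros H. lra. pose proof (H a (or_introl eq_refl)).
 assert (rsum l f <= rsum l g)%R by auto. lra. Qed.
Lemma rsum_nonneg l f : (forall x, In x l -> (0 <= f x)%R) -> (0 <= rsum l f)%R.
Proof. induction l; simpl; intros H. lra. pose proof (H a (or_introl eq_refl)).
 assert (0 <= rsum l f)%R by auto. lra. Qed.
Lemma RtoC_rsum l f : RtoC (rsum l f) = csum l (fun x => RtoC (f x)).
Proof. induction l; simpl; auto. unfold csum in *; simpl. rewrite <- IHl. rewrite RtoC_plus. auto. Qed.
Lemma Cmod_csum l (f : nat -> C) : (Cmod (csum l f) <= rsum l (fun x => Cmod (f x)))%R.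
Proof. induction l; simpl. rewrite Cmod_0. lra. unfold csum in *; simpl.
 eapply Rle_trans. apply Cmod_triangle. lra. Qed.
Lemma rsum_plus l f g : rsum l (fun x => f x + g x)%R = (rsum l f + rsum l g)%R.
Proof. induction l; simpl. ring. rewrite IHl. ring. Qed.
Lemma rsum_scal l c f : rsum l (fun x => c * f x)%R = (c * rsum l f)%R.
Proof. induction l; simpl. ring. rewrite IHl. ring. Qed.
Lemma rsum_scal_r l c f : rsum l (fun x => f x * c)%R = (rsum l f * c)%R.
Proof. induction l; simpl. ring. rewrite IHl. ring. Qed.
Lemma rsum_minus l f g : rsum l (fun x => f x - g x)%R = (rsum l f - rsum l g)%R.
Proof. induction l; simpl. ring. rewrite IHl. ring. Qed.

Lemma sum_n_csum (f : nat -> C) N : sum_n (fun k => f (S k)) N = csum (seq 1 (S N)) f.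
Proof. induction N. rewrite sum_O. unfold csum; simpl. ring.
 rewrite sum_Sn, IHN. rewrite (seq_S (S N) 1), csum_app. unfold csum at 3; simpl.
 replace (S (S N)) with (1 + S N)%nat by lia. unfold plus; simpl. ring. Qed.
Lemma sum_n_rsum (f : nat -> R) N : sum_n (fun k => f (S k)) N = rsum (seq 1 (S N)) f.
Proof. induction N. rewrite sum_O. simpl. ring.
 rewrite sum_Sn, IHN. rewrite (seq_S (S N) 1), rsum_app. simpl.
 replace (S (S N)) with (1 + S N)%nat by lia. unfold plus; simpl. ring. Qed.

Open Scope C_scope.

Definition divs (k : nat) : list nat := filter (fun d => Nat.eqb (k mod d)%nat 0) (seq 1 k).
Definition dconv (f g : nat -> C) (k : nat) : C := csum (divs k) (fun d => f d * g (k / d)%nat).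

Lemma div_S_cases a N : (1 <= a)%nat ->
  (S N / a = if Nat.eqb (S N mod a) 0 then S (N / a) else N / a)%nat.
Proof. intros Ha.
 pose proof (Nat.div_mod N a ltac:(lia)) as E. pose proof (Nat.mod_upper_bound N a ltac:(lia)) as B.
 set (q := (N / a)%nat) in *. set (rr := (N mod a)%nat) in *.
 destruct (Nat.eq_dec (S rr) a) as [Hr|Hr].
 - assert (S N = a * S q)%nat as E2 by nia.
   rewrite E2. rewrite Nat.mul_comm, Nat.Div0.mod_mul, Nat.div_mul by lia. reflexivity.
 - assert (S N mod a = S rr)%nat as Em. { symmetry. apply (Nat.mod_unique _ _ q); lia. }
   assert (S N / a = q)%nat as Ed. { symmetry. apply (Nat.div_unique _ _ q (S rr)); lia. }
   rewrite Em, Ed. reflexivity.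
Qed.

Lemma csum_multiples a N (G : nat -> C) : (1 <= a)%nat ->
  csum (seq 1 N) (fun m => if Nat.eqb (m mod a) 0 then G m else 0) =
  csum (seq 1 (N / a)) (fun e => G (a * e)%nat).
Proof. intros Ha. induction N.
 - rewrite Nat.Div0.div_0_l. reflexivity.
 - rewrite seq_S, csum_app, IHN. rewrite (div_S_cases a N Ha).
   replace (1 + N)%nat with (S N) by lia.
   unfold csum at 2; simpl.
   destruct (Nat.eqb (S N mod a) 0) eqn:E.
   + rewrite seq_S, csum_app. unfold csum at 3; simpl.
     assert (S N = a * S (N / a))%nat as EE.
     { pose proof (div_S_cases a N Ha) as D. rewrite E in D.
       apply Nat.eqb_eq in E. rewrite (Nat.div_mod (S N) a) at 1 by lia. rewrite E, D. lia. }
     replace (1 + N / a)%nat with (S (N / a)) by lia. rewrite <- EE. ring.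
   + ring.
Qed.

Lemma csum_trunc N M (F : nat -> C) : (M <= N)%nat ->
  csum (seq 1 N) (fun e => if Nat.leb e M then F e else 0) = csum (seq 1 M) F.
Proof. intros H. replace N with (M + (N - M))%nat by lia. rewrite seq_app, csum_app.
 match goal with |- _ + ?X = _ => assert (X = 0) as ->; [apply csum_zero|] end.
 intros x Hx. apply in_seq in Hx. replace (Nat.leb x M) with false; auto. symmetry; apply Nat.leb_gt; lia.
 rewrite Cplus_0_r. apply csum_ext.
 intros x Hx. apply in_seq in Hx. replace (Nat.leb x M) with true; auto. symmetry; apply Nat.leb_le; lia.
Qed.

Lemma csum_divs_ext k N (F : nat -> C) : (1 <= k <= N)%nat ->
  csum (divs k) F = csum (seq 1 N) (fun d => if Nat.eqb (k mod d) 0 then F d else 0).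
Proof. intros H. unfold divs. rewrite csum_filter.
 replace N with (k + (N - k))%nat by lia. rewrite seq_app, csum_app.
 match goal with |- _ = _ + ?X => assert (X = 0) as ->; [apply csum_zero|] end.
 2: rewrite Cplus_0_r; reflexivity.
 intros x Hx. apply in_seq in Hx. rewrite Nat.mod_small by lia. replace (Nat.eqb k 0) with false; auto.
 symmetry; apply Nat.eqb_neq; lia.
Qed.

Lemma dirichlet_partial (f g : nat -> C) N :
  csum (seq 1 N) (dconv f g) =
  csum (seq 1 N) (fun d => csum (seq 1 N) (fun e => if Nat.leb e (N / d) then f d * g e else 0)).
Proof.
 unfold dconv. rewrite (csum_ext (seq 1 N) _ (fun k => csum (seq 1 N)
    (fun d => if Nat.eqb (k mod d) 0 then f d * g (k / d)%nat else 0))).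
 2:{ intros k Hk. apply in_seq in Hk. apply csum_divs_ext. lia. }
 rewrite csum_swap. apply csum_ext. intros d Hd. apply in_seq in Hd.
 rewrite (csum_multiples d N (fun m => f d * g (m / d)%nat)) by lia.
 rewrite csum_trunc. apply csum_ext. intros e _. rewrite Nat.mul_comm, Nat.div_mul by lia. reflexivity.
 apply Nat.Div0.div_le_upper_bound. nia.
Qed.

Open Scope C_scope.

Definition Pr (a b : nat -> R) N := rsum (seq 1 N) (fun d => rsum (seq 1 N)
   (fun e => if Nat.leb e (N / d) then (a d * b e)%R else 0%R)).
Definition Qr (a b : nat -> R) N := (rsum (seq 1 N) a * rsum (seq 1 N) b)%R.

Lemma RtoC_inj' x y : RtoC x = RtoC y -> x = y.
Proof. intros H. injection H. auto. Qed.

Lemma rdirichlet_partial (a b : nat -> R) N :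
  rsum (seq 1 N) (fun k => rsum (divs k) (fun d => a d * b (k / d)%nat)%R) = Pr a b N.
Proof. apply RtoC_inj'. rewrite RtoC_rsum. unfold Pr. rewrite RtoC_rsum.
 transitivity (csum (seq 1 N) (dconv (fun x => RtoC (a x)) (fun x => RtoC (b x)))).
 { apply csum_ext. intros k _. unfold dconv. rewrite RtoC_rsum. apply csum_ext. intros. apply RtoC_mult. }
 rewrite dirichlet_partial. apply csum_ext. intros d _. rewrite RtoC_rsum. apply csum_ext. intros e _.
 destruct (Nat.leb e (N / d)); auto. symmetry; apply RtoC_mult.
Qed.

Lemma csum_mult l (f g : nat -> C) :
  csum l f * csum l g = csum l (fun d => csum l (fun e => f d * g e)).
Proof. rewrite <- csum_scal_r. apply csum_ext. intros. rewrite <- csum_scal. auto. Qed.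
Lemma rsum_mult l (f g : nat -> R) :
  (rsum l f * rsum l g)%R = rsum l (fun d => rsum l (fun e => f d * g e))%R.
Proof. rewrite <- rsum_scal_r. apply rsum_ext. intros. rewrite <- rsum_scal. auto. Qed.

Lemma rsum_prefix M N F : (M <= N)%nat -> (forall x, (0 <= F x)%R) ->
  (rsum (seq 1 M) F <= rsum (seq 1 N) F)%R.
Proof. intros H HF. replace N with (M + (N - M))%nat by lia. rewrite seq_app, rsum_app.
 assert (0 <= rsum (seq (1 + M) (N - M)) F)%R by (apply rsum_nonneg; auto). lra. Qed.

Lemma diff_bound (f g : nat -> C) N :
  (Cmod (csum (seq 1 N) f * csum (seq 1 N) g - csum (seq 1 N) (dconv f g))
   <= Qr (fun x => Cmod (f x)) (fun x => Cmod (g x)) N - Pr (fun x => Cmod (f x)) (fun x => Cmod (g x)) N)%R.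
Proof.
 rewrite dirichlet_partial, csum_mult. unfold Qr, Pr. rewrite rsum_mult.
 rewrite <- rsum_minus.
 replace (csum (seq 1 N) (fun d => csum (seq 1 N) (fun e => f d * g e)) -
   csum (seq 1 N) (fun d => csum (seq 1 N) (fun e => if Nat.leb e (N / d) then f d * g e else 0)))
  with (csum (seq 1 N) (fun d => csum (seq 1 N) (fun e => if Nat.leb e (N / d) then 0 else f d * g e))).
 2:{ unfold Cminus. rewrite <- csum_opp, <- csum_plus. apply csum_ext. intros d _.
     rewrite <- csum_opp, <- csum_plus. apply csum_ext. intros e _. destruct (Nat.leb e (N/d)); ring. }
 eapply Rle_trans. apply Cmod_csum. apply rsum_le. intros d _.
 eapply Rle_trans. apply Cmod_csum. rewrite <- rsum_minus. apply rsum_le. intros e _.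
 destruct (Nat.leb e (N/d)). rewrite Cmod_0. lra. rewrite Cmod_mult. lra.
Qed.

Lemma Pr_le_Qr a b N : (forall x, 0 <= a x)%R -> (forall x, 0 <= b x)%R -> (Pr a b N <= Qr a b N)%R.
Proof. intros Ha Hb. unfold Pr, Qr. rewrite rsum_mult. apply rsum_le. intros d _. apply rsum_le. intros e _.
 destruct (Nat.leb e (N/d)). lra. apply Rmult_le_pos; auto. Qed.

Lemma Qr_le_Pr a b M N : (forall x, 0 <= a x)%R -> (forall x, 0 <= b x)%R -> (M * M <= N)%nat -> (M <= N)%nat ->
  (Qr a b M <= Pr a b N)%R.
Proof. intros Ha Hb H1 H2. unfold Pr, Qr. rewrite rsum_mult.
 eapply Rle_trans; [|apply rsum_prefix with (M := M); auto].
 2:{ intros d. apply rsum_nonneg. intros e _. destruct (Nat.leb e (N/d)). apply Rmult_le_pos; auto. lra. }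
 apply rsum_le. intros d Hd. apply in_seq in Hd.
 eapply Rle_trans; [|apply rsum_prefix with (M := M); auto].
 2:{ intros e. destruct (Nat.leb e (N/d)). apply Rmult_le_pos; auto. lra. }
 apply rsum_le. intros e He. apply in_seq in He.
 replace (Nat.leb e (N/d)) with true. lra. symmetry. apply Nat.leb_le.
 apply Nat.div_le_lower_bound. lia. nia.
Qed.

Open Scope C_scope.

Definition conv_to (u : nat -> C) (l : C) :=
  forall eps : R, (0 < eps)%R -> exists N, forall n, (N <= n)%nat -> (Cmod (u n - l) < eps)%R.

Lemma is_series_conv (a : nat -> C) l : is_series a l <-> conv_to (sum_n a) l.
Proof. unfold is_series. split.
 - intros H eps He. destruct (proj1 (filterlim_locally_ball_norm _ _) H (mkposreal eps He)) as [N HN].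
   exists N. intros n Hn. apply HN. auto.
 - intros H. apply (proj2 (filterlim_locally_ball_norm _ _)).
   intros eps. destruct (H eps (cond_pos eps)) as [N HN]. exists N. intros n Hn. apply HN. auto.
Qed.

Lemma conv_ext (u v : nat -> C) l : (forall n, u n = v n) -> conv_to u l -> conv_to v l.
Proof. intros E H eps He. destruct (H eps He) as [N HN]. exists N. intros n Hn. rewrite <- E. auto. Qed.

Lemma conv_mult (u v : nat -> C) U W : conv_to u U -> conv_to v W -> conv_to (fun n => u n * v n) (U * W).
Proof. intros Hu Hv eps He.
 set (K := (Cmod U + Cmod W + 1)%R).
 assert (HK : (0 < K)%R) by (unfold K; pose proof (Cmod_ge_0 U); pose proof (Cmod_ge_0 W); lra).
 set (d := Rmin 1 (eps / (2 * K))).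
 assert (Hd : (0 < d)%R). { unfold d. apply Rmin_case. lra. apply Rdiv_lt_0_compat; lra. }
 destruct (Hu d Hd) as [N1 H1]. destruct (Hv d Hd) as [N2 H2]. exists (N1 + N2)%nat. intros n Hn.
 specialize (H1 n ltac:(lia)). specialize (H2 n ltac:(lia)).
 replace (u n * v n - U * W) with ((u n - U) * v n + U * (v n - W)) by ring.
 eapply Rle_lt_trans. apply Cmod_triangle. rewrite !Cmod_mult.
 assert (Cmod (v n) <= Cmod W + 1)%R.
 { replace (v n) with ((v n - W) + W) by ring. eapply Rle_trans. apply Cmod_triangle.
   assert (d <= 1)%R by (unfold d; apply Rmin_l). lra. }
 assert (d <= eps / (2 * K))%R by (unfold d; apply Rmin_r).
 pose proof (Cmod_ge_0 U). pose proof (Cmod_ge_0 (u n - U)). pose proof (Cmod_ge_0 (v n - W)).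
 pose proof (Cmod_ge_0 (v n)).
 assert (Cmod (u n - U) * Cmod (v n) <= d * (Cmod W + 1))%R.
 { apply Rmult_le_compat; lra. }
 assert (Cmod U * Cmod (v n - W) <= Cmod U * d)%R.
 { apply Rmult_le_compat_l; lra. }
 assert (d * K <= eps / 2)%R.
 { replace (eps / 2)%R with (eps / (2 * K) * K)%R by (field; lra). apply Rmult_le_compat_r; lra. }
 unfold K in *. nra.
Qed.

Lemma real_lim_spec (u : nat -> R) (l : R) : is_lim_seq u l ->
  forall eps : R, (0 < eps)%R -> exists N, forall n, (N <= n)%nat -> (Rabs (u n - l) < eps)%R.
Proof. intros H eps He. apply is_lim_seq_spec in H. destruct (H (mkposreal eps He)) as [N HN].
 exists N. auto. Qed.

Theorem dirichlet (f g : nat -> C) (F G : C) :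
  ex_series (fun k => Cmod (f (S k))) -> ex_series (fun k => Cmod (g (S k))) ->
  is_series (fun k => f (S k)) F -> is_series (fun k => g (S k)) G ->
  is_series (fun k => dconv f g (S k)) (F * G) /\ ex_series (fun k => Cmod (dconv f g (S k))).
Proof.
 intros Haf Hag Hf Hg.
 set (a := fun x => Cmod (f x)). set (b := fun x => Cmod (g x)).
 assert (Ha0 : forall x, (0 <= a x)%R) by (intros; apply Cmod_ge_0).
 assert (Hb0 : forall x, (0 <= b x)%R) by (intros; apply Cmod_ge_0).
 set (A := Series (fun k => a (S k))). set (B := Series (fun k => b (S k))).
 assert (HQ : is_lim_seq (fun N => Qr a b (S N)) (A * B)%R).
 { unfold Qr. apply is_lim_seq_mult'.
   - apply (is_lim_seq_ext (sum_n (fun k => a (S k)))). intros; apply sum_n_rsum. apply (Series_correct _ Haf).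
   - apply (is_lim_seq_ext (sum_n (fun k => b (S k)))). intros; apply sum_n_rsum. apply (Series_correct _ Hag). }
 assert (HP : is_lim_seq (fun N => Pr a b (S N)) (A * B)%R).
 { apply is_lim_seq_spec. intros eps. destruct (real_lim_spec _ _ HQ eps (cond_pos eps)) as [N1 H1].
   exists (S N1 * S N1)%nat. intros n Hn.
   assert (Qr a b (S N1) <= Pr a b (S n))%R as E1. { apply Qr_le_Pr; auto; nia. }
   assert (Pr a b (S n) <= Qr a b (S n))%R as E2 by (apply Pr_le_Qr; auto).
   pose proof (H1 N1 ltac:(lia)) as E3. pose proof (H1 n ltac:(nia)) as E4.
   apply Rabs_def1; apply Rabs_def2 in E3; apply Rabs_def2 in E4; lra. }
 split.
 - apply is_series_conv. apply is_series_conv in Hf. apply is_series_conv in Hg.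
   pose proof (conv_mult _ _ _ _ Hf Hg) as HM.
   intros eps He. destruct (HM (eps/2)%R ltac:(lra)) as [N1 H1].
   destruct (real_lim_spec _ _ HQ (eps/4)%R ltac:(lra)) as [N2 H2].
   destruct (real_lim_spec _ _ HP (eps/4)%R ltac:(lra)) as [N3 H3].
   exists (N1 + N2 + N3)%nat. intros n Hn.
   specialize (H1 n ltac:(lia)). specialize (H2 n ltac:(lia)). specialize (H3 n ltac:(lia)).
   rewrite !sum_n_csum in *.
   pose proof (diff_bound f g (S n)) as DB. fold a b in DB.
   set (X := csum (seq 1 (S n)) (dconv f g)) in *.
   set (Y := csum (seq 1 (S n)) f * csum (seq 1 (S n)) g) in *.
   replace (X - F * G) with ((Y - F * G) + - (Y - X)) by ring.
   eapply Rle_lt_trans. apply Cmod_triangle. rewrite Cmod_opp.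
   apply Rabs_def2 in H2. apply Rabs_def2 in H3. lra.
 - apply (@ex_series_le R_AbsRing R_CompleteNormedModule _ (fun k => rsum (divs (S k)) (fun d => a d * b (S k / d)%nat)%R)).
   + intros k. change (Rabs (Cmod (dconv f g (S k))) <= rsum (divs (S k)) (fun d => a d * b (S k / d)%nat))%R.
     rewrite Rabs_pos_eq by apply Cmod_ge_0. unfold dconv. eapply Rle_trans. apply Cmod_csum.
     apply rsum_le. intros. rewrite Cmod_mult. apply Rle_refl.
   + exists (A * B)%R.
     assert (is_lim_seq (sum_n (fun k => rsum (divs (S k)) (fun d => a d * b (S k / d)%nat)%R)) (A * B)%R) as HH.
     { apply (is_lim_seq_ext (fun N => Pr a b (S N))); auto.
       intros N. rewrite (sum_n_rsum (fun k => rsum (divs k) (fun d => a d * b (k / d)%nat)%R)).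
       rewrite rdirichlet_partial. reflexivity. }
     exact HH.
Qed.

Open Scope C_scope.

Lemma cis_add a b : cis (a + b) = cis a * cis b.
Proof. unfold cis. apply injective_projections; simpl; rewrite ?cos_plus, ?sin_plus; ring. Qed.
Lemma cis_0 : cis 0 = 1.
Proof. unfold cis. rewrite cos_0, sin_0. reflexivity. Qed.
Lemma Cmod_cis a : Cmod (cis a) = 1%R.
Proof. unfold cis, Cmod. simpl. rewrite Rmult_1_r, Rmult_1_r.
 replace (cos a * cos a + sin a * sin a)%R with 1%R. apply sqrt_1.
 pose proof (sin2_cos2 a). unfold Rsqr in H. lra. Qed.

Lemma cpowR_add x s u : cpowR x (s + u) = cpowR x s * cpowR x u.
Proof. unfold cpowR. replace (Re (s + u)) with (Re s + Re u)%R by reflexivity.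
 replace (Im (s + u)) with (Im s + Im u)%R by reflexivity.
 rewrite !Rmult_plus_distr_r, exp_plus, cis_add, RtoC_mult. ring. Qed.

Lemma cpowR_mulb x y s : (0 < x)%R -> (0 < y)%R -> cpowR (x * y) s = cpowR x s * cpowR y s.
Proof. intros. unfold cpowR. rewrite ln_mult by auto. rewrite !Rmult_plus_distr_l, exp_plus, cis_add, RtoC_mult. ring. Qed.

Lemma cpowR_nat x r : (0 < x)%R -> cpowR x (RtoC (INR r)) = RtoC (x ^ r).
Proof. intros. unfold cpowR. simpl. rewrite Rmult_0_l, cis_0, Cmult_1_r.
 f_equal. rewrite <- Rpower_pow by auto. reflexivity. Qed.

Lemma Cmod_cpowR x s : Cmod (cpowR x s) = exp (Re s * ln x).
Proof. unfold cpowR. rewrite Cmod_mult, Cmod_cis, Rmult_1_r, Cmod_R. apply Rabs_pos_eq.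
 left. apply exp_pos. Qed.

Lemma cpowR_neq0 x s : cpowR x s <> 0.
Proof. intros H. assert (Cmod (cpowR x s) = 0%R) by (rewrite H; apply Cmod_0).
 rewrite Cmod_cpowR in H0. pose proof (exp_pos (Re s * ln x)). lra. Qed.

Lemma cpowR_zero x : cpowR x 0 = 1.
Proof. unfold cpowR. simpl. rewrite !Rmult_0_l, exp_0, cis_0. ring. Qed.

Lemma cpowR_opp x s : cpowR x (- s) = / cpowR x s.
Proof. assert (cpowR x (-s) * cpowR x s = 1).
 { rewrite <- cpowR_add. replace (-s + s) with (RtoC 0) by ring. apply cpowR_zero. }
 pose proof (cpowR_neq0 x s). rewrite <- (Cmult_1_l (/ cpowR x s)). rewrite <- H. field. auto. Qed.

Lemma cpowR_one s : cpowR 1 s = 1.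
Proof. unfold cpowR. rewrite ln_1, !Rmult_0_r, exp_0, cis_0. ring. Qed.

Lemma ln_le_sub1 y : (0 < y)%R -> (ln y <= y - 1)%R.
Proof. intros H. pose proof (exp_ineq1_le (ln y)). rewrite exp_ln in H0 by auto. lra. Qed.

Lemma tele_key x al : (2 <= x)%R -> (0 < al)%R ->
  (al * exp (- (1 + al) * ln x) <= exp (- al * ln (x - 1)) - exp (- al * ln x))%R.
Proof. intros Hx Ha.
 assert (E : (exp (- al * ln (x - 1)) = exp (- al * ln x) * exp (- al * (ln (x - 1) - ln x)))%R).
 { rewrite <- exp_plus. f_equal. ring. }
 rewrite E.
 assert (L : (ln (x - 1) - ln x <= - / x)%R).
 { rewrite <- ln_div by lra. eapply Rle_trans. apply ln_le_sub1. apply Rdiv_lt_0_compat; lra.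
   right. field. lra. }
 pose proof (exp_ineq1_le (- al * (ln (x - 1) - ln x))).
 assert (exp (- (1 + al) * ln x) = exp (- al * ln x) * / x)%R.
 { replace (- (1 + al) * ln x)%R with (- al * ln x + - ln x)%R by ring. rewrite exp_plus, exp_Ropp, exp_ln by lra. auto. }
 rewrite H0. pose proof (exp_pos (- al * ln x)).
 assert (al / x <= - al * (ln (x - 1) - ln x))%R.
 { unfold Rdiv. replace (- al * (ln (x - 1) - ln x))%R with (al * (- (ln (x - 1) - ln x)))%R by ring.
   apply Rmult_le_compat_l; lra. }
 assert (al * (exp (- al * ln x) * / x) = exp (- al * ln x) * (al / x))%R by (unfold Rdiv; ring).
 rewrite H3. replace (exp (- al * ln x) * exp (- al * (ln (x - 1) - ln x)) - exp (- al * ln x))%R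
  with (exp (- al * ln x) * (exp (- al * (ln (x - 1) - ln x)) - 1))%R by ring.
 apply Rmult_le_compat_l; lra.
Qed.

Lemma zeta_partial_bound sg N : (1 < sg)%R -> (1 <= N)%nat ->
  (rsum (seq 1 N) (fun k => exp (- sg * ln (INR k))) <= 1 + (1 - exp (- (sg - 1) * ln (INR N))) / (sg - 1))%R.
Proof. intros Hs HN. induction N. lia. destruct N.
 - simpl. rewrite ln_1, !Rmult_0_r, exp_0. replace ((1 - 1) / (sg - 1))%R with 0%R by (field; lra). lra.
 - rewrite seq_S, rsum_app.
   match goal with |- (_ + rsum (?x :: nil) ?f <= _)%R => change (rsum (x :: nil) f) with (f x + 0)%R end.
   specialize (IHN ltac:(lia)).
   replace (1 + S N)%nat with (S (S N)) by lia.
   pose proof (tele_key (INR (S (S N))) (sg - 1) ltac:(rewrite !S_INR; pose proof (pos_INR N); lra) ltac:(lra)).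
   replace (INR (S (S N)) - 1)%R with (INR (S N)) in H by (rewrite (S_INR (S N)); ring).
   replace (- (1 + (sg - 1)))%R with (- sg)%R in H by ring.
   apply (Rmult_le_compat_r (/ (sg - 1))) in H. 2:{ left; apply Rinv_0_lt_compat; lra. }
   replace ((sg - 1) * exp (- sg * ln (INR (S (S N)))) * / (sg - 1))%R with (exp (- sg * ln (INR (S (S N))))) in H
     by (field; lra).
   unfold Rdiv in *. cbv beta.
   eapply Rle_trans.
   { apply Rplus_le_compat. apply IHN. rewrite Rplus_0_r. apply H. }
   right; ring.
Qed.

Lemma zeta_abs_conv sg : (1 < sg)%R -> ex_series (fun k => exp (- sg * ln (INR (S k)))).
Proof. intros Hs.
 set (u := fun N => sum_n (fun k => exp (- sg * ln (INR (S k)))) N).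
 assert (Hg : Un_growing u).
 { intros n. unfold u. rewrite sum_Sn. unfold plus; simpl.
   match goal with |- (_ <= _ + exp ?z)%R => pose proof (exp_pos z) end. lra. }
 assert (Hb : has_ub u).
 { exists (1 + 1 / (sg - 1))%R. intros y [n Hn]. subst y. unfold u.
   rewrite (sum_n_rsum (fun k => exp (- sg * ln (INR k)))).
   eapply Rle_trans. apply zeta_partial_bound; auto; lia.
   pose proof (exp_pos (- (sg - 1) * ln (INR (S n)))).
   unfold Rdiv. apply Rplus_le_compat_l. apply Rmult_le_compat_r. left; apply Rinv_0_lt_compat; lra. lra. }
 destruct (growing_cv u Hg Hb) as [l Hl]. exists l. apply is_lim_seq_Reals in Hl. exact Hl.
Qed.

Module PF.
Local Open Scope nat_scope.

Definition prime (p : nat) := 2 <= p /\ forall d, Nat.divide d p -> d = 1 \/ d = p.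

Lemma divide_mod a b : Nat.divide b a <-> a mod b = 0.
Proof. symmetry. apply Nat.Lcm0.mod_divide. Qed.

Lemma prime_div_mul p a b : prime p -> Nat.divide p (a * b) -> Nat.divide p a \/ Nat.divide p b.
Proof. intros [H2 Hp] H. destruct (Hp (Nat.gcd p a) (Nat.gcd_divide_l p a)) as [G|G].
 - right. apply (Nat.gauss p a b); auto.
 - left. rewrite <- G. apply Nat.gcd_divide_r.
Qed.

Lemma prime_div_pow p a r : prime p -> Nat.divide p (a ^ r) -> Nat.divide p a.
Proof. intros Hp. induction r; simpl; intros H.
 - destruct Hp as [H2 _]. apply Nat.divide_pos_le in H; lia.
 - apply prime_div_mul in H; auto. destruct H; auto.
Qed.

Lemma prime_pow_div p y z j : prime p -> ~ Nat.divide p y -> Nat.divide (p ^ j) (y * z) -> Nat.divide (p ^ j) z.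
Proof. intros Hp Hy. revert z. induction j; intros z H.
 - simpl. apply Nat.divide_1_l.
 - assert (Nat.divide p (y * z)). { eapply Nat.divide_trans; [|apply H]. simpl. apply Nat.divide_factor_l. }
   apply prime_div_mul in H0; auto. destruct H0 as [H0|[z' Hz']]. contradiction.
   subst z. simpl in H. replace (y * (z' * p)) with (p * (y * z')) in H by ring.
   apply Nat.mul_divide_cancel_l in H. 2:{ destruct Hp; lia. }
   apply IHj in H. simpl. rewrite Nat.mul_comm. apply Nat.mul_divide_mono_r. auto.
Qed.

Fixpoint sf (fuel d k : nat) : nat :=
  match fuel with
  | 0 => k
  | S f => if Nat.eqb (k mod d) 0 then d else sf f (S d) k
  end.
Definition spf k := sf k 2 k.

Lemma sf_spec fuel : forall d k, 2 <= d -> d <= k -> k < d + fuel ->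
  (forall e, 2 <= e < d -> ~ Nat.divide e k) ->
  2 <= sf fuel d k <= k /\ Nat.divide (sf fuel d k) k /\
  (forall e, 2 <= e < sf fuel d k -> ~ Nat.divide e k).
Proof. induction fuel; intros d k H1 H2 H3 H4. lia. simpl.
 destruct (Nat.eqb (k mod d) 0) eqn:E.
 - apply Nat.eqb_eq in E. split; [lia|split; [apply divide_mod; auto| auto]].
 - apply Nat.eqb_neq in E. assert (d <> k) by (intro Hdk; rewrite Hdk in E; rewrite Nat.Div0.mod_same in E; lia).
   apply IHfuel; try lia. intros e He. destruct (Nat.eq_dec e d). subst. rewrite divide_mod. auto.
   apply H4; lia.
Qed.

Lemma spf_spec k : 2 <= k -> 2 <= spf k <= k /\ Nat.divide (spf k) k /\
  (forall e, 2 <= e < spf k -> ~ Nat.divide e k).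
Proof. intros. apply sf_spec; try lia. Qed.

Lemma spf_prime k : 2 <= k -> prime (spf k).
Proof. intros Hk. destruct (spf_spec k Hk) as [B [D M]]. split. lia. intros e He.
 assert (e <= spf k) by (apply Nat.divide_pos_le; auto; lia).
 destruct (Nat.eq_dec e 0). subst. destruct He as [x Hx]. lia.
 destruct (Nat.eq_dec e 1). auto. destruct (Nat.eq_dec e (spf k)). auto.
 exfalso. apply (M e). lia. eapply Nat.divide_trans; eauto.
Qed.

Lemma spf_min k e : 2 <= k -> 2 <= e -> Nat.divide e k -> spf k <= e.
Proof. intros Hk He D. destruct (spf_spec k Hk) as [B [D' M]].
 destruct (le_lt_dec (spf k) e); auto. exfalso. apply (M e); auto. Qed.

Lemma prime_ge2 p : prime p -> 2 <= p. Proof. intros [H _]; auto. Qed.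

Lemma prime_divides_prime p q : prime p -> prime q -> Nat.divide q p -> q = p.
Proof. intros Hp Hq D. destruct Hp as [_ Hp]. destruct (Hp q D); auto. destruct Hq; lia. Qed.

Lemma prime_mul_div p e k : prime p -> Nat.divide p k -> Nat.divide e k -> ~ Nat.divide p e -> Nat.divide (p * e) k.
Proof. intros Hp Dp [x Hx] Ne. subst k. destruct (prime_div_mul p x e Hp Dp) as [[y Hy]|H].
 subst x. exists y. ring. contradiction. Qed.

Lemma pow_divide_mono e d r : Nat.divide e d -> Nat.divide (e ^ r) (d ^ r).
Proof. intros [x Hx]. subst d. exists (x ^ r). apply Nat.pow_mul_l. Qed.

Definition Qg (r m k : nat) (d : nat) : bool := Nat.eqb (k mod d) 0 && Nat.eqb (m mod d ^ r) 0.

Lemma list_max_in x l : In x l -> (x <= list_max l)%nat.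
Proof. intros H. pose proof (proj1 (list_max_le l (list_max l)) (le_n _)) as F.
 rewrite Forall_forall in F. auto. Qed.

Local Open Scope R_scope.
Fixpoint mu_f (fuel k : nat) : R :=
  match fuel with
  | O => 1
  | S f => if Nat.leb k 1 then 1 else
      let p := spf k in if Nat.eqb ((k / p) mod p) 0 then 0 else - mu_f f (k / p)
  end.
Definition mu (k : nat) : R := mu_f k k.

Lemma mu_f_fuel f1 : forall f2 k, (k <= f1)%nat -> (k <= f2)%nat -> mu_f f1 k = mu_f f2 k.
Proof. induction f1; intros f2 k H1 H2.
 - destruct f2; simpl; auto. replace (Nat.leb k 1) with true; auto. symmetry; apply Nat.leb_le; lia.
 - destruct f2. simpl. replace (Nat.leb k 1) with true; auto. symmetry; apply Nat.leb_le; lia.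
   simpl. destruct (Nat.leb k 1) eqn:E; auto. apply Nat.leb_gt in E.
   destruct (spf_spec k ltac:(lia)) as [B _].
   assert (k / spf k < k)%nat by (apply Nat.div_lt; lia).
   rewrite (IHf1 f2); auto; lia.
Qed.

Lemma mu_f_S f k : mu_f (S f) k = if Nat.leb k 1 then 1 else
      let p := spf k in if Nat.eqb ((k / p) mod p) 0 then 0 else - mu_f f (k / p).
Proof. reflexivity. Qed.

Lemma mu_unfold k : (2 <= k)%nat ->
  mu k = if Nat.eqb ((k / spf k) mod spf k) 0 then 0 else - mu (k / spf k).
Proof. intros Hk. unfold mu at 1. destruct k as [|k]; try lia. rewrite mu_f_S.
 replace (Nat.leb (S k) 1) with false by (symmetry; apply Nat.leb_gt; lia). cbv zeta.
 destruct (spf_spec (S k) Hk) as [B _].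
 assert (S k / spf (S k) < S k)%nat by (apply Nat.div_lt; lia).
 destruct (Nat.eqb _ 0); auto. unfold mu. rewrite (mu_f_fuel k (S k / spf (S k))); auto; lia.
Qed.

Lemma mu_1 : mu 1 = 1. Proof. reflexivity. Qed.

Lemma mu_bound k : Rabs (mu k) <= 1.
Proof. unfold mu. generalize k at 2. induction k; intros m; simpl.
 rewrite Rabs_R1; lra. destruct (Nat.leb m 1). rewrite Rabs_R1; lra.
 destruct (Nat.eqb _ 0). rewrite Rabs_R0; lra. rewrite Rabs_Ropp. auto.
Qed.

Lemma mu_prime_mul p e : prime p -> (1 <= e)%nat ->
  mu (p * e) = if Nat.eqb (e mod p) 0 then 0 else - mu e.
Proof. intros Hp. induction e as [e IH] using lt_wf_ind. intros He.
 pose proof (prime_ge2 p Hp) as Hp2.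
 assert (Hk : (2 <= p * e)%nat) by nia.
 set (q := spf (p * e)).
 destruct (spf_spec (p * e) Hk) as [Bq [Dq Mq]]. fold q in Bq, Dq, Mq.
 assert (Hq : prime q) by (apply spf_prime; auto).
 assert (q <= p)%nat by (apply spf_min; auto; apply Nat.divide_factor_l).
 destruct (Nat.eq_dec q p) as [Eq|Nq].
 - rewrite mu_unfold by auto. fold q. rewrite Eq. rewrite Nat.mul_comm, Nat.div_mul by lia. reflexivity.
 - assert (NqP : ~ Nat.divide q p). { intro D. apply Nq. apply prime_divides_prime; auto. }
   assert (Dqe : Nat.divide q e). { destruct (prime_div_mul q p e Hq Dq); auto. contradiction. }
   destruct Dqe as [e' He'].
   assert (He1 : (1 <= e')%nat) by nia.
   assert (Hq2 := prime_ge2 q Hq).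
   assert (Lt : (e' < e)%nat) by nia.
   assert (Se : spf e = q).
   { destruct (spf_spec e ltac:(nia)) as [B2 [D2 M2]].
     apply Nat.le_antisymm.
     - apply spf_min; try lia. exists e'. lia.
     - destruct (le_lt_dec q (spf e)); auto. exfalso. apply (Mq (spf e)). lia.
       eapply Nat.divide_trans. apply D2. apply Nat.divide_mul_r. apply Nat.divide_refl. }
   rewrite mu_unfold by auto. fold q.
   rewrite (mu_unfold e) by nia. rewrite Se.
   replace (p * e / q)%nat with (p * e')%nat by (rewrite He'; rewrite Nat.mul_assoc, Nat.div_mul; lia).
   replace (e / q)%nat with e' by (rewrite He', Nat.div_mul; lia).
   rewrite IH by auto.
   assert (Emq : Nat.eqb ((p * e') mod q) 0 = Nat.eqb (e' mod q) 0).
   { destruct (Nat.eqb (e' mod q) 0) eqn:E1.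
     - apply Nat.eqb_eq. apply divide_mod. apply Nat.eqb_eq in E1. apply divide_mod in E1.
       apply Nat.divide_mul_r. auto.
     - apply Nat.eqb_neq. intro E2. apply divide_mod in E2. apply prime_div_mul in E2; auto.
       destruct E2. contradiction. apply Nat.eqb_neq in E1. apply E1. apply divide_mod. auto. }
   assert (Emp : Nat.eqb (e mod p) 0 = Nat.eqb (e' mod p) 0).
   { destruct (Nat.eqb (e' mod p) 0) eqn:E1.
     - apply Nat.eqb_eq. apply divide_mod. apply Nat.eqb_eq in E1. apply divide_mod in E1.
       rewrite He'. apply Nat.divide_mul_l. auto.
     - apply Nat.eqb_neq. intro E2. apply divide_mod in E2. rewrite He' in E2. apply prime_div_mul in E2; auto.
       destruct E2 as [E2|E2]; [apply Nat.eqb_neq in E1; apply E1; apply divide_mod; auto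
        | apply Nat.divide_pos_le in E2; lia]. }
   rewrite Emq, Emp.
   destruct (Nat.eqb (e' mod q) 0); destruct (Nat.eqb (e' mod p) 0); lra.
Qed.

End PF.
Import PF.
Open Scope C_scope.

Lemma mobius_Q (K : nat) (Q : nat -> bool)
 (HQb : forall d, Q d = true -> (1 <= d <= K)%nat)
 (HQd : forall d e, Q d = true -> (1 <= e)%nat -> Nat.divide e d -> Q e = true)
 (HQm : forall p e, prime p -> Q p = true -> Q e = true -> ~ Nat.divide p e -> Q (p * e)%nat = true)
 p : prime p -> Q p = true ->
  csum (seq 1 K) (fun d => if Q d then RtoC (mu d) else 0) = 0.
Proof. intros Hp HQp. pose proof (prime_ge2 p Hp) as Hp2.
 set (T := fun d => if Q d then RtoC (mu d) else 0).
 rewrite (csum_ext _ T (fun d => (if Nat.eqb (d mod p) 0 then T d else 0) + (if Nat.eqb (d mod p) 0 then 0 else T d)))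
   by (intros; destruct (Nat.eqb _ 0); ring).
 rewrite csum_plus. rewrite csum_multiples by lia.
 rewrite <- (csum_trunc K (K / p)) by (apply Nat.Div0.div_le_upper_bound; nia).
 rewrite <- csum_plus. apply csum_zero. intros e He. apply in_seq in He.
 destruct (Nat.eqb (e mod p) 0) eqn:Ep.
 - destruct (Nat.leb e (K / p)); [|ring]. unfold T. destruct (Q (p * e)%nat); [|ring].
   rewrite mu_prime_mul by (auto; lia). rewrite Ep. ring.
 - unfold T. destruct (Q e) eqn:Qe.
   + assert (Qpe : Q (p * e)%nat = true).
     { apply HQm; auto. intro D. apply divide_mod in D. apply Nat.eqb_neq in Ep. auto. }
     assert (Nat.leb e (K / p) = true).
     { apply Nat.leb_le. apply Nat.div_le_lower_bound. lia. apply HQb in Qpe. lia. }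
     rewrite H, Qpe. rewrite mu_prime_mul by (auto; lia). rewrite Ep. rewrite RtoC_opp. ring.
   + assert (Qpe : Q (p * e)%nat = false).
     { destruct (Q (p * e)%nat) eqn:E; auto.
       assert (Q e = true) by (apply (HQd (p * e)%nat); auto; try lia; apply Nat.divide_factor_r). congruence. }
     rewrite Qpe. destruct (Nat.leb e (K / p)); ring.
Qed.

Lemma mobius_sum_bool (K : nat) (Q : nat -> bool)
 (HQb : forall d, Q d = true -> (1 <= d <= K)%nat)
 (HQd : forall d e, Q d = true -> (1 <= e)%nat -> Nat.divide e d -> Q e = true)
 (HQm : forall p e, prime p -> Q p = true -> Q e = true -> ~ Nat.divide p e -> Q (p * e)%nat = true)
 (HQ1 : Q 1%nat = true) :
  csum (seq 1 K) (fun d => if Q d then RtoC (mu d) else 0) =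
  if existsb (fun d => Nat.leb 2 d && Q d) (seq 1 K) then 0 else 1.
Proof. destruct (existsb _ _) eqn:E.
 - apply existsb_exists in E. destruct E as [d [Hd Hq]]. apply andb_true_iff in Hq. destruct Hq as [H2 Hq].
   apply Nat.leb_le in H2. apply (mobius_Q K Q HQb HQd HQm (spf d)). apply spf_prime; auto.
   destruct (spf_spec d H2) as [B [D _]]. apply (HQd d); auto; lia.
 - assert (HK : (1 <= K)%nat) by (apply HQb in HQ1; lia).
   replace K with (1 + (K - 1))%nat by lia. rewrite seq_app, csum_app.
   replace (csum (seq 1 1) _) with (RtoC (mu 1)) by (unfold csum; simpl; rewrite HQ1; ring).
   rewrite mu_1. rewrite csum_zero. ring.
   intros d Hd. apply in_seq in Hd. destruct (Q d) eqn:Qd; auto. exfalso.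
   assert (existsb (fun d => Nat.leb 2 d && Q d) (seq 1 K) = true).
   { apply existsb_exists. exists d. split. apply in_seq. apply HQb in Qd. lia.
     rewrite Qd. rewrite andb_true_r. apply Nat.leb_le. lia. }
   replace (1 + (K - 1))%nat with K in E by lia. congruence.
Qed.

Lemma mobius_divs k : (1 <= k)%nat -> csum (divs k) (fun d => RtoC (mu d)) = if Nat.eqb k 1 then 1 else 0.
Proof. intros Hk. unfold divs. rewrite csum_filter.
 rewrite (mobius_sum_bool k (fun d => Nat.eqb (k mod d) 0)).
 - destruct (Nat.eqb k 1) eqn:E1.
   + apply Nat.eqb_eq in E1. subst. reflexivity.
   + replace (existsb _ _) with true; auto. symmetry. apply existsb_exists. exists k.
     apply Nat.eqb_neq in E1. split. apply in_seq; lia. rewrite Nat.Div0.mod_same.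
     rewrite andb_true_r. apply Nat.leb_le. lia.
 - intros d Hd. apply Nat.eqb_eq in Hd. destruct d. simpl in Hd. lia.
   apply divide_mod in Hd. apply Nat.divide_pos_le in Hd; lia.
 - intros d e Hd He De. apply Nat.eqb_eq, divide_mod. apply Nat.eqb_eq, divide_mod in Hd. eapply Nat.divide_trans; eauto.
 - intros p e Hp Qp Qe Ne. apply Nat.eqb_eq, divide_mod. apply Nat.eqb_eq, divide_mod in Qp.
   apply Nat.eqb_eq, divide_mod in Qe. apply prime_mul_div; auto.
 - apply Nat.eqb_eq. apply Nat.mod_1_r.
Qed.

Lemma gcdr_one r m k : (1 <= r)%nat -> (1 <= m)%nat -> (1 <= k)%nat ->
  Nat.eqb (gcdr r m (k ^ r)%nat) 1 = negb (existsb (fun d => Nat.leb 2 d && Qg r m k d) (seq 1 k)).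
Proof. intros Hr Hm Hk. unfold gcdr. destruct (existsb _ _) eqn:E; simpl.
 - apply existsb_exists in E. destruct E as [d [Hd Hq]]. apply in_seq in Hd.
   unfold Qg in Hq. apply andb_true_iff in Hq. destruct Hq as [H2 Hq]. apply andb_true_iff in Hq.
   destruct Hq as [H3 H4]. apply Nat.leb_le in H2. apply Nat.eqb_eq, divide_mod in H3. apply Nat.eqb_eq, divide_mod in H4.
   assert (Hdr : (d <= d ^ r)%nat). { destruct r. lia. simpl. pose proof (Nat.pow_le_mono_l 1 d r ltac:(lia)).
     rewrite Nat.pow_1_l in H. nia. }
   assert (d ^ r <= m)%nat by (apply Nat.divide_pos_le; auto).
   apply Nat.eqb_neq. intro Hg.
   assert (d ^ r <= 1)%nat.
   { rewrite <- Hg. eapply Nat.le_trans; [|apply list_max_in].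
     2:{ apply in_map. apply (in_seq m 1 d). lia. }
     replace (Nat.eqb (m mod d ^ r) 0) with true by (symmetry; apply Nat.eqb_eq, divide_mod; auto).
     replace (Nat.eqb (k ^ r mod d ^ r) 0) with true by (symmetry; apply Nat.eqb_eq, divide_mod; apply pow_divide_mono; auto).
     simpl. lia. }
   lia.
 - apply Nat.eqb_eq. apply Nat.le_antisymm.
   + apply list_max_le. apply Forall_forall. intros x Hx. apply in_map_iff in Hx. destruct Hx as [d [Hx Hd]].
     subst x. apply in_seq in Hd.
     destruct (Nat.eqb (m mod d ^ r) 0 && Nat.eqb (k ^ r mod d ^ r) 0) eqn:C; [|lia].
     apply andb_true_iff in C. destruct C as [C1 C2]. apply Nat.eqb_eq, divide_mod in C1. apply Nat.eqb_eq, divide_mod in C2.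
     destruct (Nat.eq_dec d 1). subst. rewrite Nat.pow_1_l. lia.
     exfalso. assert (H2 : (2 <= d)%nat) by lia.
     destruct (spf_spec d H2) as [B [D _]]. pose proof (spf_prime d H2) as Hp.
     assert (Dk : Nat.divide (spf d) k).
     { apply (prime_div_pow _ _ r Hp). eapply Nat.divide_trans; [|apply C2].
       eapply Nat.divide_trans; [apply D|]. destruct r. lia. simpl. apply Nat.divide_factor_l. }
     assert (existsb (fun d => Nat.leb 2 d && Qg r m k d) (seq 1 k) = true).
     { apply existsb_exists. exists (spf d). split. apply in_seq. apply Nat.divide_pos_le in Dk; lia.
       unfold Qg. apply andb_true_iff. split. apply Nat.leb_le; lia. apply andb_true_iff. split.
       apply Nat.eqb_eq, divide_mod; auto. apply Nat.eqb_eq, divide_mod. eapply Nat.divide_trans; [|apply C1].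
       apply pow_divide_mono; auto. }
     congruence.
   + eapply Nat.le_trans; [|apply list_max_in]. 2:{ apply in_map. apply (in_seq m 1 1). lia. }
     rewrite Nat.pow_1_l, !Nat.mod_1_r. simpl. lia.
Qed.

Lemma gcdr_indicator r m k : (1 <= r)%nat -> (1 <= m)%nat -> (1 <= k)%nat ->
  (if Nat.eqb (gcdr r m (k ^ r)%nat) 1 then RtoC 1 else RtoC 0) =
  csum (seq 1 k) (fun d => if Qg r m k d then RtoC (mu d) else 0).
Proof. intros Hr Hm Hk. rewrite gcdr_one by auto. rewrite mobius_sum_bool.
 - destruct (existsb _ _); reflexivity.
 - intros d Hd. unfold Qg in Hd. apply andb_true_iff in Hd. destruct Hd as [Hd _].
   apply Nat.eqb_eq in Hd. destruct d. simpl in Hd. lia.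
   apply divide_mod in Hd. apply Nat.divide_pos_le in Hd; lia.
 - intros d e Hd He De. unfold Qg in *. apply andb_true_iff in Hd. destruct Hd as [H1 H2].
   apply Nat.eqb_eq, divide_mod in H1. apply Nat.eqb_eq, divide_mod in H2.
   apply andb_true_iff. split; apply Nat.eqb_eq, divide_mod. eapply Nat.divide_trans; eauto.
   eapply Nat.divide_trans; [|apply H2]. apply pow_divide_mono; auto.
 - intros p e Hp Qp Qe Ne. unfold Qg in *.
   apply andb_true_iff in Qp. destruct Qp as [P1 P2]. apply andb_true_iff in Qe. destruct Qe as [E1 E2].
   apply Nat.eqb_eq, divide_mod in P1. apply Nat.eqb_eq, divide_mod in P2.
   apply Nat.eqb_eq, divide_mod in E1. apply Nat.eqb_eq, divide_mod in E2.
   apply andb_true_iff. split; apply Nat.eqb_eq, divide_mod. apply prime_mul_div; auto.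
   destruct E2 as [x Hx]. rewrite Hx. rewrite Nat.pow_mul_l.
   assert (Nat.divide (p ^ r) x).
   { apply (prime_pow_div p (e ^ r) x r Hp). intro D. apply Ne. eapply prime_div_pow; eauto.
     rewrite Nat.mul_comm, <- Hx. auto. }
   destruct H as [y Hy]. subst x. exists y. ring.
 - unfold Qg. rewrite Nat.pow_1_l, !Nat.mod_1_r. reflexivity.
Qed.

Open Scope C_scope.

Lemma cis_period x k : cis (x + 2 * INR k * PI) = cis x.
Proof. unfold cis. rewrite cos_period, sin_period. reflexivity. Qed.

Lemma geom_cis th N : csum (seq 1 N) (fun j => cis (INR j * th)) * (cis th - 1) =
  cis (INR (S N) * th) - cis th.
Proof. induction N.
 - simpl. rewrite Rmult_1_l. unfold csum; simpl. ring.
 - rewrite seq_S, csum_app, csum_cons, csum_nil.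
   replace (1 + N)%nat with (S N) by lia.
   rewrite Cmult_plus_distr_r, IHN.
   replace (INR (S (S N)) * th)%R with (INR (S N) * th + th)%R by (rewrite (S_INR (S N)); ring).
   rewrite cis_add. ring.
Qed.

Lemma cis_ne1 x : (0 < x < 2 * PI)%R -> cis x <> 1.
Proof. intros Hx H. unfold cis in H. injection H. intros Hs Hc.
 destruct (sin_eq_O_2PI_0 x ltac:(lra) ltac:(lra) Hs) as [E|[E|E]]; try lra.
 subst. rewrite cos_PI in Hc. lra. Qed.

Lemma csum_const_one N : csum (seq 1 N) (fun _ => 1) = RtoC (INR N).
Proof. induction N. reflexivity. rewrite seq_S, csum_app, IHN, csum_cons, csum_nil.
 rewrite S_INR. rewrite RtoC_plus. ring. Qed.

Lemma root_unity_sum N n : (1 <= N)%nat ->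
  csum (seq 1 N) (fun j => cis (2 * PI * INR j * INR n / INR N)) =
  if Nat.eqb (n mod N) 0 then RtoC (INR N) else 0.
Proof. intros HN.
 assert (HNr : (0 < INR N)%R) by (apply lt_0_INR; lia).
 set (th := (2 * PI * INR n / INR N)%R).
 rewrite (csum_ext _ _ (fun j => cis (INR j * th))) by (intros; unfold th; f_equal; field; lra).
 pose proof (Nat.div_mod n N ltac:(lia)) as Dn. pose proof (Nat.mod_upper_bound n N ltac:(lia)) as Bn.
 set (q := (n / N)%nat) in *. set (rho := (n mod N)%nat) in *.
 assert (Eth : th = (2 * PI * INR rho / INR N + 2 * INR q * PI)%R).
 { unfold th. rewrite Dn. rewrite plus_INR, mult_INR. field. lra. }
 destruct (Nat.eqb rho 0) eqn:Er.
 - apply Nat.eqb_eq in Er. rewrite Er in Eth. rewrite (csum_ext _ _ (fun _ => 1)). apply csum_const_one.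
   intros j _. rewrite Eth. replace (INR j * (2 * PI * INR 0 / INR N + 2 * INR q * PI))%R
     with (0 + 2 * INR (j * q) * PI)%R by (rewrite mult_INR; simpl; field; lra).
   rewrite cis_period, cis_0. reflexivity.
 - apply Nat.eqb_neq in Er.
   assert (Hw : cis th <> 1).
   { rewrite Eth, cis_period. apply cis_ne1. assert (0 < INR rho)%R by (apply lt_0_INR; lia).
     assert (INR rho < INR N)%R by (apply lt_INR; lia). pose proof PI_RGT_0. split.
     apply Rdiv_lt_0_compat; nra. apply (Rmult_lt_reg_r (INR N)); auto. unfold Rdiv.
     rewrite Rmult_assoc, Rinv_l, Rmult_1_r by lra. nra. }
   pose proof (geom_cis th N) as G.
   assert (cis (INR (S N) * th) = cis th).
   { replace (INR (S N) * th)%R with (th + 2 * INR n * PI)%R. apply cis_period.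
     unfold th. rewrite S_INR. field. lra. }
   rewrite H in G. replace (cis th - cis th) with (RtoC 0) in G by ring.
   assert (cis th - 1 <> 0). { intro E0. apply Hw. replace (cis th) with (cis th - 1 + 1) by ring. rewrite E0. ring. }
   rewrite <- (Cmult_1_r (csum _ _)). rewrite <- (Cinv_r (cis th - 1)) by auto.
   rewrite Cmult_assoc, G. ring.
Qed.

Definition hfun (r n q : nat) : C := if Nat.eqb (n mod q ^ r)%nat 0 then RtoC (INR (q ^ r)%nat) else 0.

Lemma ramr_formula r n k : (1 <= r)%nat -> (1 <= k)%nat ->
  ramr r n k = csum (divs k) (fun d => RtoC (mu d) * hfun r n (k / d)%nat).
Proof. intros Hr Hk.
 assert (HK : (1 <= k ^ r)%nat) by (apply Nat.neq_0_lt_0, Nat.pow_nonzero; lia).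
 unfold ramr. rewrite csum_filter.
 set (e := fun m => cis (2 * PI * INR m * INR n / INR (k ^ r)%nat)).
 rewrite (csum_ext _ _ (fun m => csum (seq 1 k) (fun d =>
     if Nat.eqb (k mod d) 0 then (if Nat.eqb (m mod d ^ r)%nat 0 then RtoC (mu d) * e m else 0) else 0))).
 2:{ intros m Hm. apply in_seq in Hm.
     transitivity ((if Nat.eqb (gcdr r m (k ^ r)%nat) 1 then RtoC 1 else RtoC 0) * e m).
     unfold e. destruct (Nat.eqb _ 1); ring.
     rewrite gcdr_indicator by lia. rewrite <- csum_scal_r. apply csum_ext. intros d _.
     unfold Qg. destruct (Nat.eqb (k mod d) 0); destruct (Nat.eqb (m mod d ^ r)%nat 0); simpl; ring. }
 rewrite csum_swap. unfold divs. rewrite csum_filter. apply csum_ext. intros d Hd. apply in_seq in Hd.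
 destruct (Nat.eqb (k mod d) 0) eqn:Ed; [|apply csum_zero; auto].
 apply Nat.eqb_eq, divide_mod in Ed. destruct Ed as [q Hq].
 assert (Hq1 : (1 <= q)%nat) by nia.
 replace (k / d)%nat with q by (rewrite Hq, Nat.div_mul; lia).
 rewrite (csum_ext _ _ (fun x => RtoC (mu d) * (if Nat.eqb (x mod d ^ r)%nat 0 then e x else 0)))
   by (intros; destruct (Nat.eqb _ 0); ring).
 rewrite csum_scal. f_equal.
 rewrite csum_multiples. 2:{ apply Nat.neq_0_lt_0, Nat.pow_nonzero; lia. }
 assert (Kq : (k ^ r = d ^ r * q ^ r)%nat) by (rewrite Hq, Nat.pow_mul_l; ring).
 assert (Hdr : (d ^ r <> 0)%nat) by (apply Nat.pow_nonzero; lia).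
 assert (Hqr : (1 <= q ^ r)%nat) by (apply Nat.neq_0_lt_0, Nat.pow_nonzero; lia).
 rewrite Kq. rewrite (Nat.mul_comm (d ^ r) (q ^ r)), Nat.div_mul by auto.
 unfold hfun. rewrite <- root_unity_sum by auto. apply csum_ext. intros j _. unfold e. f_equal.
 rewrite Kq, !mult_INR. assert (0 < INR (d ^ r))%R by (apply lt_0_INR; lia).
 assert (0 < INR (q ^ r))%R by (apply lt_0_INR; lia). field. lra.
Qed.

Open Scope C_scope.

Lemma im_le_Cmod c : (Rabs (Im c) <= Cmod c)%R.
Proof. unfold Cmod. rewrite <- (sqrt_pow2 (Rabs (Im c))) by apply Rabs_pos.
 apply sqrt_le_1_alt. rewrite pow2_abs. pose proof (pow2_ge_0 (fst c)). unfold Im. lra. Qed.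

Lemma sum_n_Re (a : nat -> C) N : sum_n (fun k => Re (a k)) N = Re (sum_n a N).
Proof. induction N. rewrite !sum_O. auto. rewrite !sum_Sn, IHN. reflexivity. Qed.
Lemma sum_n_Im (a : nat -> C) N : sum_n (fun k => Im (a k)) N = Im (sum_n a N).
Proof. induction N. rewrite !sum_O. auto. rewrite !sum_Sn, IHN. reflexivity. Qed.

Lemma CSeries_correct (a : nat -> C) l : is_series a l -> CSeries a = l.
Proof. intros H. apply is_series_conv in H. unfold CSeries.
 assert (HR : is_series (fun k => Re (a k)) (Re l)).
 { assert (is_lim_seq (sum_n (fun k => Re (a k))) (Re l)) as HH; [|exact HH].
   apply is_lim_seq_spec. intros eps. destruct (H eps (cond_pos eps)) as [N HN]. exists N. intros n Hn.
   rewrite sum_n_Re. eapply Rle_lt_trans; [|apply (HN n Hn)].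
   replace (Re (sum_n a n) - Re l)%R with (Re (sum_n a n - l)) by reflexivity. apply re_le_Cmod. }
 assert (HI : is_series (fun k => Im (a k)) (Im l)).
 { assert (is_lim_seq (sum_n (fun k => Im (a k))) (Im l)) as HH; [|exact HH].
   apply is_lim_seq_spec. intros eps. destruct (H eps (cond_pos eps)) as [N HN]. exists N. intros n Hn.
   rewrite sum_n_Im. eapply Rle_lt_trans; [|apply (HN n Hn)].
   replace (Im (sum_n a n) - Im l)%R with (Im (sum_n a n - l)) by reflexivity. apply im_le_Cmod. }
 rewrite (is_series_unique _ _ HR), (is_series_unique _ _ HI). destruct l; reflexivity.
Qed.

Lemma is_series_finite (a : nat -> C) N0 : (forall k, (N0 < k)%nat -> a k = 0) -> is_series a (sum_n a N0).
Proof. intros H. apply is_series_conv. intros eps He. exists N0. intros n Hn.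
 replace (sum_n a n) with (sum_n a N0). replace (sum_n a N0 - sum_n a N0) with (RtoC 0) by ring.
 rewrite Cmod_0. auto.
 induction Hn. auto. rewrite sum_Sn, H by lia. rewrite IHHn. change (@eq C (sum_n a m) (Cplus (sum_n a m) 0)). rewrite Cplus_0_r. reflexivity.
Qed.

Lemma Cmod_pow_n (t : C) d : (Cmod t <= 1)%R -> (Cmod (pow_n t d) <= 1)%R.
Proof. intros Ht. induction d. simpl. change (Cmod 1 <= 1)%R. rewrite Cmod_1. lra.
 simpl. change (Cmod (t * pow_n t d) <= 1)%R. rewrite Cmod_mult.
 pose proof (Cmod_ge_0 t). pose proof (Cmod_ge_0 (pow_n t d)). nra. Qed.

Definition wv (s : C) (d : nat) : C := / cpowR (INR d) s.

Lemma wv_mul (s : C) a b : (1 <= a)%nat -> (1 <= b)%nat -> wv s (a * b) = wv s a * wv s b.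
Proof. intros. unfold wv. rewrite mult_INR, cpowR_mulb. field. split; apply cpowR_neq0.
 apply lt_0_INR; lia. apply lt_0_INR; lia. Qed.

Lemma wv_1 (s : C) : wv s 1 = 1.
Proof. unfold wv. simpl INR. rewrite cpowR_one. field. Qed.

Lemma Cmod_wv (s : C) d : (1 <= d)%nat -> Cmod (wv s d) = exp (- Re s * ln (INR d)).
Proof. intros. unfold wv. rewrite Cmod_inv by apply cpowR_neq0. rewrite Cmod_cpowR.
 replace (- Re s * ln (INR d))%R with (- (Re s * ln (INR d)))%R by ring. rewrite exp_Ropp. auto. Qed.

Lemma dconv_wv (s : C) (f g : nat -> C) k : (1 <= k)%nat ->
  dconv (fun d => f d * wv s d) (fun d => g d * wv s d) k = csum (divs k) (fun d => f d * g (k / d)%nat) * wv s k.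
Proof. intros Hk. unfold dconv. rewrite <- csum_scal_r. apply csum_ext. intros d Hd.
 unfold divs in Hd. apply filter_In in Hd. destruct Hd as [Hd Hm]. apply in_seq in Hd.
 apply Nat.eqb_eq, divide_mod in Hm. destruct Hm as [q Hq].
 assert (1 <= q)%nat by nia.
 replace (k / d)%nat with q by (rewrite Hq, Nat.div_mul; lia).
 rewrite Hq, Nat.mul_comm, wv_mul by lia. ring.
Qed.

Lemma ex_series_wv s : (1 < Re s)%R -> ex_series (fun k => Cmod (wv s (S k))).
Proof. intros H. apply (ex_series_ext (fun k => exp (- Re s * ln (INR (S k))))).
 intros; rewrite Cmod_wv; auto; lia. apply zeta_abs_conv. auto. Qed.

Lemma ex_series_bounded (f : nat -> C) s M : (1 < Re s)%R ->
  (forall d, (1 <= d)%nat -> (Cmod (f d) <= M)%R) ->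
  ex_series (fun k => Cmod (f (S k) * wv s (S k))).
Proof. intros Hs HM.
 apply (@ex_series_le R_AbsRing R_CompleteNormedModule _ (fun k => M * Cmod (wv s (S k)))%R).
 - intros k. change (Rabs (Cmod (f (S k) * wv s (S k))) <= M * Cmod (wv s (S k)))%R.
   rewrite Rabs_pos_eq by apply Cmod_ge_0. rewrite Cmod_mult. apply Rmult_le_compat_r. apply Cmod_ge_0.
   apply HM. lia.
 - apply (@ex_series_scal_l R_AbsRing R_NormedModule). apply ex_series_wv; auto.
Qed.

Lemma ex_series_C (a : nat -> C) : ex_series (fun k => Cmod (a k)) -> exists l, is_series a l.
Proof. intros H. apply (@ex_series_le C_AbsRing C_CompleteNormedModule a (fun k => Cmod (a k))); auto.
 intros. apply Rle_refl. Qed.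

Open Scope C_scope.

Theorem proposition4 (r n : nat) (p t : C)
  (hr : (0 < r)%nat) (hn : (0 < n)%nat)
  (hp : (1 < Re (RtoC (INR r) * (p + 1)))%R)
  (ht : (Cmod t <= 1)%R) :
  is_series (fun k : nat => Mr r t n (S k) / cpowR (INR (S k)) (RtoC (INR r) * p))
    (Li (RtoC (INR r) * p + RtoC (INR r)) t / zeta (RtoC (INR r) * p + RtoC (INR r))
     * sigmar (- p) n r).
Proof.
 set (s := RtoC (INR r) * p + RtoC (INR r)).
 assert (Hs : (1 < Re s)%R). { replace s with (RtoC (INR r) * (p + 1)) by (unfold s; ring). auto. }
 set (fL := fun d => pow_n t d * wv s d).
 set (fM := fun d => RtoC (mu d) * wv s d).
 set (fH := fun d => hfun r n d * wv s d).
 assert (exL : ex_series (fun k => Cmod (fL (S k)))).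
 { apply (ex_series_bounded _ s 1); auto. intros. apply Cmod_pow_n; auto. }
 assert (exM : ex_series (fun k => Cmod (fM (S k)))).
 { apply (ex_series_bounded (fun d => RtoC (mu d)) s 1); auto. intros. rewrite Cmod_R. apply mu_bound. }
 assert (exZ : ex_series (fun k => Cmod (wv s (S k)))) by (apply ex_series_wv; auto).
 assert (exH : ex_series (fun k => Cmod (fH (S k)))).
 { apply (ex_series_bounded (hfun r n) s (INR n)); auto. intros d Hd. unfold hfun.
   destruct (Nat.eqb (n mod d ^ r)%nat 0) eqn:E.
   - rewrite Cmod_R, Rabs_pos_eq by apply pos_INR. apply le_INR. apply Nat.eqb_eq, divide_mod in E.
     apply Nat.divide_pos_le; auto.
   - rewrite Cmod_0. apply pos_INR. }
 destruct (ex_series_C _ exL) as [Lv HL].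
 destruct (ex_series_C _ exM) as [Mv HM].
 destruct (ex_series_C _ exZ) as [Zv HZ].
 assert (HH : is_series (fun k => fH (S k)) (sigmar (- p) n r)).
 { assert (E1 : is_series (fun k => fH (S k)) (sum_n (fun k => fH (S k)) (n - 1))).
   { apply is_series_finite. intros k Hk. unfold fH, hfun.
     replace (Nat.eqb (n mod S k ^ r)%nat 0) with false. ring. symmetry. apply Nat.eqb_neq.
     assert (S k <= S k ^ r)%nat. { destruct r. lia. simpl. pose proof (Nat.pow_le_mono_l 1 (S k) r ltac:(lia)).
       rewrite Nat.pow_1_l in H. nia. }
     rewrite Nat.mod_small by lia. lia. }
   rewrite sum_n_csum in E1. replace (S (n - 1)) with n in E1 by lia.
   replace (sigmar (- p) n r) with (csum (seq 1 n) fH); auto.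
   unfold sigmar. rewrite csum_filter. apply csum_ext. intros d Hd. apply in_seq in Hd.
   unfold fH, hfun. destruct (Nat.eqb (n mod d ^ r)%nat 0); [|ring].
   assert (Hd0 : (0 < INR d)%R) by (apply lt_0_INR; lia).
   unfold wv, s. rewrite cpowR_add, cpowR_nat by auto. rewrite pow_INR.
   replace (RtoC (INR r) * - p) with (- (RtoC (INR r) * p)) by ring. rewrite cpowR_opp.
   field. split. apply cpowR_neq0. intro E0. apply RtoC_inj' in E0. apply pow_nonzero in E0; auto; lra. }
 destruct (dirichlet fM (wv s) Mv Zv exM exZ HM HZ) as [HMZ _].
 assert (HMZ1 : is_series (fun k => dconv fM (wv s) (S k)) (sum_n (fun k => dconv fM (wv s) (S k)) 0)).
 { apply is_series_finite. intros k Hk.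
   transitivity (dconv (fun d => RtoC (mu d) * wv s d) (fun d => 1 * wv s d) (S k)).
   { unfold dconv. apply csum_ext. intros. unfold fM. ring. }
   rewrite dconv_wv by lia. rewrite (csum_ext _ _ (fun d => RtoC (mu d))) by (intros; ring).
   rewrite mobius_divs by lia. replace (Nat.eqb (S k) 1) with false by (symmetry; apply Nat.eqb_neq; lia). ring. }
 assert (EMZ : Mv * Zv = 1).
 { rewrite (filterlim_locally_unique _ _ _ HMZ HMZ1). rewrite sum_O.
   transitivity (dconv (fun d => RtoC (mu d) * wv s d) (fun d => 1 * wv s d) 1).
   { unfold dconv. apply csum_ext. intros. unfold fM. ring. }
   rewrite dconv_wv by lia. rewrite (csum_ext _ _ (fun d => RtoC (mu d))) by (intros; ring).
   rewrite mobius_divs by lia. simpl Nat.eqb. rewrite wv_1. ring. }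
 destruct (dirichlet fM fH Mv (sigmar (- p) n r) exM exH HM HH) as [HA exA].
 destruct (dirichlet fL (dconv fM fH) Lv (Mv * sigmar (- p) n r) exL exA HL HA) as [HF _].
 assert (ELi : Li s t = Lv).
 { unfold Li. apply CSeries_correct. eapply is_series_ext; [|exact HL]. intros; reflexivity. }
 assert (EZ : zeta s = Zv).
 { unfold zeta. apply CSeries_correct. eapply is_series_ext; [|exact HZ]. intros; reflexivity. }
 rewrite ELi, EZ.
 assert (Zv <> RtoC 0). { intro E0. rewrite E0, Cmult_0_r in EMZ. injection EMZ. lra. }
 replace (Lv / Zv * sigmar (- p) n r) with (Lv * (Mv * sigmar (- p) n r)).
 2:{ replace Mv with (/ Zv). field. auto. rewrite <- (Cmult_1_l (/ Zv)). rewrite <- EMZ. field. auto. }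
 eapply is_series_ext; [|exact HF]. intros k.
 set (K := S k).
 assert (HK : (1 <= K)%nat) by (unfold K; lia).
 assert (EA : forall q, (1 <= q)%nat -> dconv fM fH q = ramr r n q * wv s q).
 { intros q Hq. unfold fM, fH. rewrite dconv_wv by auto. rewrite ramr_formula by lia. reflexivity. }
 transitivity (dconv fL (fun q => ramr r n q * wv s q) K).
 { unfold dconv. apply csum_ext. intros d Hd. unfold divs in Hd. apply filter_In in Hd. destruct Hd as [Hd Hm].
   apply in_seq in Hd. apply Nat.eqb_eq, divide_mod in Hm. destruct Hm as [q Hq].
   f_equal. apply EA. rewrite Hq, Nat.div_mul by lia. nia. }
 unfold fL. rewrite dconv_wv by auto.
 unfold Mr. change (filter (fun d => Nat.eqb (K mod d) 0) (seq 1 K)) with (divs K).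
 rewrite (csum_ext (divs K) (fun d => ramr r n (K / d)%nat * pow_n t d) (fun d => pow_n t d * ramr r n (K / d)%nat))
   by (intros; ring).
 assert (HK0 : (0 < INR K)%R) by (apply lt_0_INR; lia).
 unfold wv, s. rewrite cpowR_add, cpowR_nat by auto. rewrite pow_INR.
 unfold Cdiv. match goal with |- ?a = ?b => change (@eq C a b) end. field. split. apply cpowR_neq0. intro E0. apply RtoC_inj' in E0. apply pow_nonzero in E0; auto; lra.
Qed.
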